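(* Let $P(x)=a_2x^2+a_1x+a_0$ and $R(x)=b_2x^2+b_1x$ be complex polynomials with $a_2,b_2\ne0$. For $n\ge0$ and $\alpha\in\mathbb C$ let $F(n,\alpha)=\prod_{z\in P^{-1}(R^{-n}(\alpha))}z$, the product of the $2^{n+1}$ roots, counted with multiplicity, of $R^{\circ n}(P(z))=\alpha$. Then $F(n,\alpha)=c_{n,1}\alpha+c_{n,0}$ with $c_{n,1}=-\frac{b_2}{(a_2b_2)^{2^n}}$ and $c_{n,0}=\frac{1}{(a_2b_2)^{2^n}}\big(H(n)-\frac{b_1}{2}\big)$, where $H(0)=a_0b_2+\frac{b_1}{2}$ and $H(n)=H(n-1)^2+\frac{b_1(2-b_1)}{4}$ for $n\ge1$.
   Context: $R^{\circ n}$ denotes the $n$-fold composition ($R^{\circ0}=\mathrm{id}$); $R^{-n}(\alpha)$ is the multiset of roots of $R^{\circ n}(w)=\alpha$ and $P^{-1}(S)$ the multiset union of the roots of $P(z)=w$ over $w\in S$. *)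

(* Defs.v *)
(* complex numbers as [complex R] = R[i] for R : realType (i.e. C). *)
From HB Require Import structures.
From mathcomp Require Import all_boot all_order all_algebra.
From mathcomp Require Import reals.
From mathcomp Require Import complex.
Set Implicit Arguments. Unset Strict Implicit. Unset Printing Implicit Defensive.
Import Order.TTheory GRing.Theory Num.Theory.
Local Open Scope ring_scope.

Definition poly_iter (F : nzRingType) (R : {poly F}) (n : nat) : {poly F} :=
  iter n (fun q => R \Po q) 'X.

Definition roots_with_mult (F : nzRingType) (p : {poly F}) (rs : seq F) : Prop :=
  p = lead_coef p *: \prod_(z <- rs) ('X - z%:P).

Fixpoint Hseq (F : fieldType) (a0 b1 b2 : F) (n : nat) : F :=
  match n with
  | 0 => a0 * b2 + b1 / 2%:R
  | m.+1 => (Hseq a0 b1 b2 m) ^+ 2 + b1 * (2%:R - b1) / 4%:R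
  end.

(* Main.v *)
Require Import Defs.
From HB Require Import structures.
From mathcomp Require Import all_boot all_order all_algebra.
From mathcomp Require Import reals.
From mathcomp Require Import complex.
From mathcomp Require Import ring zify.
Import Order.TTheory GRing.Theory Num.Theory.
Local Open Scope ring_scope.

Lemma quad_size (F : idomainType) (c d e : F) : c != 0 ->
  size (c *: 'X^2 + d *: 'X + e%:P) = 3%N /\ lead_coef (c *: 'X^2 + d *: 'X + e%:P) = c.
Proof.
move=> c0.
have h1 : size (c *: 'X^2 : {poly F}) = 3%N by rewrite size_scale // size_polyXn.
have h2 : (size (d *: 'X + e%:P : {poly F})%R < 3)%N.
  apply: (leq_ltn_trans (size_polyD _ _)).
  rewrite gtn_max; apply/andP; split.
    by apply: (leq_ltn_trans (size_scale_leq _ _)); rewrite size_polyX.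
  by apply: (leq_ltn_trans (size_polyC_leq1 _)).
rewrite -addrA; split; first by rewrite size_polyDl h1.
by rewrite lead_coefDl ?h1 // lead_coefZ lead_coefXn mulr1.
Qed.

Lemma prod_neg_seq (F : comNzRingType) (rs : seq F) :
  \prod_(z <- rs) ('X - z%:P).[0] = (-1) ^+ size rs * \prod_(z <- rs) z.
Proof.
elim: rs => [|x rs IH]; first by rewrite !big_nil expr0 mulr1.
rewrite !big_cons IH hornerXsubC /= exprS; ring.
Qed.

Theorem lemma5p5 (R : realType) (a2 a1 a0 b2 b1 : R[i]) :
  a2 != 0 -> b2 != 0 ->
  let P : {poly R[i]} := a2 *: 'X^2 + a1 *: 'X + a0%:P in
  let Rp : {poly R[i]} := b2 *: 'X^2 + b1 *: 'X in
  forall (n : nat) (alpha : R[i]) (rs : seq R[i]),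
    roots_with_mult ((poly_iter Rp n \Po P) - alpha%:P) rs ->
    \prod_(z <- rs) z =
      (- b2 / (a2 * b2) ^+ (2 ^ n)) * alpha
      + (Hseq a0 b1 b2 n - b1 / 2%:R) / (a2 * b2) ^+ (2 ^ n).
Proof.
move=> a20 b20 P Rp n alpha rs.
have [sP lP] : size P = 3%N /\ lead_coef P = a2 by exact: quad_size.
have [sR lR] : size Rp = 3%N /\ lead_coef Rp = b2.
  by have := @quad_size _ b2 b1 0 b20; rewrite addr0.
have two0 : (2%:R : R[i]) != 0 by rewrite pnatr_eq0.
set G := fun m => poly_iter Rp m \Po P.
have GS : forall m, G m.+1 = Rp \Po G m.
  by move=> m; rewrite /G /poly_iter iterS comp_polyA.
have key : forall m, [/\ size (G m) = (2 ^ m.+1).+1,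
    lead_coef (G m) * b2 = (a2 * b2) ^+ (2 ^ m) &
    b2 * (G m).[0] = Hseq a0 b1 b2 m - b1 / 2%:R].
  elim=> [|m [s l e]].
    rewrite /G /poly_iter /= comp_polyX sP lP.
    split => //.
    rewrite /P !hornerE /=; by field.
  have s1 : (1 < size (G m))%N by rewrite s expnS; have := expn_gt0 2 m; lia.
  have lc : lead_coef (Rp \Po G m) * b2 = (a2 * b2) ^+ (2 ^ m.+1).
    rewrite lead_coef_comp // sR lR /= expnS mulnC exprM -l; ring.
  rewrite GS; split => //.
  - have := size_comp_poly Rp (G m); rewrite sR s /=.
    have := size_poly_eq0 (Rp \Po G m).
    case: (size (Rp \Po G m)) => [|k] /=; last by move=> _ ->; rewrite !expnS; lia.
    move=> /esym; rewrite -lead_coef_eq0 => /eqP E; move: lc; rewrite E mul0r => /esym /eqP.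
    by rewrite expf_eq0 mulf_eq0 (negPf a20) (negPf b20) andbF.
  - rewrite horner_comp /Rp !hornerE /=.
    move: e; set y := (G m).[0]; set h := Hseq a0 b1 b2 m => e.
    have -> : b2 * (b2 * y * y + b1 * y) = (b2 * y) ^+ 2 + b1 * (b2 * y) by ring.
    rewrite e; by field.
have [s l e] := key n.
rewrite /roots_with_mult -/(G n) => hr.
have sG : (size (alpha%:P) < size (G n))%N.
  by apply: (leq_ltn_trans (size_polyC_leq1 _)); rewrite s; have := expn_gt0 2 n.+1; lia.
have lD : lead_coef (G n - alpha%:P) = lead_coef (G n).
  by rewrite lead_coefDl // size_polyN.
have L0 : lead_coef (G n) != 0.
  apply/negP => /eqP L0; move: l; rewrite L0 mul0r => /esym /eqP.
  by rewrite expf_eq0 mulf_eq0 (negPf a20) (negPf b20) andbF.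
have sz : size rs = (2 ^ n.+1)%N.
  have := congr1 (fun p : {poly R[i]} => size p) hr; rewrite /=; rewrite size_scale ?lD // size_prod_XsubC.
  by rewrite size_polyDl ?size_polyN // s => -[].
have := congr1 (fun p => p.[0]) hr; rewrite /= hornerZ horner_prod lD.
rewrite prod_neg_seq sz expnS exprM sqrrN !expr1n mul1r hornerE /=.
rewrite hornerN hornerC => E.
have D0 : (a2 * b2) ^+ (2 ^ n) != 0 by rewrite -l mulf_neq0.
have -> : \prod_(z <- rs) z = ((G n).[0] - alpha) / lead_coef (G n).
  by rewrite E mulrC mulrA mulVf // mul1r.
rewrite -l -e; move: L0; generalize (lead_coef (G n)) ((G n).[0]) => L y L0; field.
by rewrite L0 b20.
Qed.
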